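(* Let $k\ge1$ be an integer. Define \[ G_k=\bigcup_{n=0}^k T_a^{-n}(0)\cap\{x:\varkappa_a(x)\ge k\},\qquad D_k=\bigcup_{n=0}^{k-1}T_a^{-n}\Big(\frac{2a-1}{1-a}\Big)\cup\Big\{\frac1{1-a}\Big\}, \] and $g_k(x)=\max\{y\in G_k:y\le x\}$. (a) For any $a\in(\frac12,\frac23)$: the set $\{x:\varkappa_a(x)\ge k\}$ is a union of finitely many disjoint intervals $\{[g_k(y),y]:y\in D_k\}$; the set of left endpoints of these intervals is $G_k$; and on each of these intervals the functions $\delta_0(x),\dots,\delta_{k-1}(x)$ are constant and $T_a^1(x),\dots,T_a^k(x)$ are continuous and strictly increasing. (b) The assertions of (a) remain valid for $a=\frac23$ if the family of intervals is replaced by $\{[g_k(y-),y):y\in D_k,\,y\neq3\}\cup\{[g_k(3),3]\}$, where $g_k(y-)$ denotes the left limit of $g_k$ at $y$.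
   Context: For $a\in[\frac12,\frac23]$ let $I_a=\big(\frac{2a-1}{1-a},1\big)$ and define $T_a$ on $[0,\frac1{1-a}]\setminus I_a$ by $T_a(x)=\frac1a(x+1)$ for $0\le x\le\frac{2a-1}{1-a}$ and $T_a(x)=\frac1a(x-1)$ for $1\le x\le\frac1{1-a}$; for $a=\frac23$ set $T_{2/3}(1)=0$. For $x\in[0,\frac1{1-a}]$ let $\varkappa_a(x)=\inf\{k\ge0:T_a^k(x)\in I_a\}$ ($\inf\emptyset=\infty$), so $T_a^k(x)$ is defined iff $k\le\varkappa_a(x)$; $T_a^{-n}(z)$ denotes the set of $x$ with $\varkappa_a(x)\ge n$ and $T_a^n(x)=z$. For $0\le k\le\varkappa_a(x)$ put $\delta_k(x)=\mathbb 1\{T_a^k(x)<1\}$. *)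

(* Defs.v *)
From Stdlib Require Import Reals Lra ClassicalEpsilon.
From Coquelicot Require Import Coquelicot.
Open Scope R_scope.

Definition ca (a : R) : R := (2 * a - 1) / (1 - a).
Definition Ra (a : R) : R := 1 / (1 - a).

Definition in_Ia (a x : R) : Prop := ca a < x < 1.
Definition in_dom (a x : R) : Prop := 0 <= x <= Ra a.

(* T_a, extended to a total function on R.  On [0,c_a] (x<1) it is (x+1)/a,
   on [1, 1/(1-a)] it is (x-1)/a; for a = 2/3 this gives T(1) = 0 as required. *)
Definition Ta (a x : R) : R := if Rlt_dec x 1 then (x + 1) / a else (x - 1) / a.

Definition Tit (a : R) (n : nat) (x : R) : R := Nat.iter n (Ta a) x.

Definition kappa_ge (a x : R) (n : nat) : Prop :=
  in_dom a x /\ forall j : nat, (j < n)%nat -> ~ in_Ia a (Tit a j x).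

Definition preim (a : R) (n : nat) (z x : R) : Prop :=
  kappa_ge a x n /\ Tit a n x = z.

Definition delta (a : R) (j : nat) (x : R) : nat :=
  if Rlt_dec (Tit a j x) 1 then 1%nat else 0%nat.

Definition Gk (a : R) (k : nat) (x : R) : Prop :=
  (exists n : nat, (n <= k)%nat /\ preim a n 0 x) /\ kappa_ge a x k.

Definition Dk (a : R) (k : nat) (y : R) : Prop :=
  (exists n : nat, (n < k)%nat /\ preim a n (ca a) y) \/ y = Ra a.

Definition is_gk (a : R) (k : nat) (x g : R) : Prop :=
  Gk a k g /\ g <= x /\ forall y, Gk a k y -> y <= x -> y <= g.

(* g_k(x) = max{y in G_k : y <= x} (chosen by classical choice; meaningful
   when the maximum exists) *)
Definition gk (a : R) (k : nat) (x : R) : R :=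
  epsilon (inhabits 0) (fun g => is_gk a k x g).

Definition in_intv (l y : R) (closed : Prop) (x : R) : Prop :=
  l <= x /\ (x < y \/ (closed /\ x = y)).

Definition cont_on (P : R -> Prop) (f : R -> R) : Prop :=
  forall x, P x -> forall eps, 0 < eps -> exists d, 0 < d /\
    forall x', P x' -> Rabs (x' - x) < d -> Rabs (f x' - f x) < eps.

Definition strict_incr_on (P : R -> Prop) (f : R -> R) : Prop :=
  forall x x', P x -> P x' -> x < x' -> f x < f x'.

Definition assertions (a : R) (k : nat) (l : R -> R) (cl : R -> Prop) : Prop :=
  (exists s : list R, forall y, Dk a k y <-> List.In y s) /\
  (forall x, kappa_ge a x k <-> exists y, Dk a k y /\ in_intv (l y) y (cl y) x) /\
  (forall y y', Dk a k y -> Dk a k y' -> y <> y' ->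
     forall x, ~ (in_intv (l y) y (cl y) x /\ in_intv (l y') y' (cl y') x)) /\
  (forall g, Gk a k g <-> exists y, Dk a k y /\ l y = g) /\
  (forall y, Dk a k y -> forall j, (j < k)%nat -> forall x x',
     in_intv (l y) y (cl y) x -> in_intv (l y) y (cl y) x' ->
     delta a j x = delta a j x') /\
  (forall y, Dk a k y -> forall j, (1 <= j <= k)%nat ->
     cont_on (in_intv (l y) y (cl y)) (Tit a j) /\
     strict_incr_on (in_intv (l y) y (cl y)) (Tit a j)).

(* Main.v *)
Require Import Defs.
From Stdlib Require Import Reals Lra Lia List ZArith Classical ClassicalEpsilon.
From Coquelicot Require Import Coquelicot.
Open Scope R_scope.

Lemma Tit_S a n x : Tit a (S n) x = Ta a (Tit a n x).
Proof. reflexivity. Qed.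
Lemma Tit_0 a x : Tit a 0 x = x.
Proof. reflexivity. Qed.
Lemma Tit_add a m n x : Tit a (m + n) x = Tit a m (Tit a n x).
Proof. unfold Tit. apply Nat.iter_add. Qed.

Lemma delta_iff a j x y : delta a j x = delta a j y <-> (Tit a j x < 1 <-> Tit a j y < 1).
Proof.
  unfold delta; destruct (Rlt_dec (Tit a j x) 1), (Rlt_dec (Tit a j y) 1);
  split; intro H; try tauto; try reflexivity; try discriminate; exfalso; tauto.
Qed.

Lemma Tit_affine a j x x' : 0 < a ->
  (forall i, (i < j)%nat -> delta a i x = delta a i x') ->
  Tit a j x' - Tit a j x = (x' - x) / a ^ j.
Proof.
  intros Ha; induction j as [|j IH]; intros Hd.
  - rewrite !Tit_0. simpl. field.
  - rewrite !Tit_S. assert (E := IH (fun i Hi => Hd i (Nat.lt_lt_succ_r _ _ Hi))).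
    specialize (Hd j (Nat.lt_succ_diag_r j)). apply delta_iff in Hd.
    assert (Hp : 0 < a ^ j) by (apply pow_lt; lra).
    assert (E' : Tit a j x' = Tit a j x + (x' - x) / a ^ j) by lra. rewrite E' in *.
    unfold Ta. destruct (Rlt_dec (Tit a j x) 1), (Rlt_dec (Tit a j x + (x' - x) / a ^ j) 1);
      try (exfalso; tauto); simpl; field; lra.
Qed.

Lemma Tit_nonneg a n x : 0 < a -> 0 <= x -> 0 <= Tit a n x.
Proof.
  intros Ha Hx; induction n as [|n IH]; [exact Hx|].
  rewrite Tit_S; unfold Ta; destruct (Rlt_dec (Tit a n x) 1).
  - apply Rdiv_le_0_compat; lra.
  - apply Rdiv_le_0_compat; lra.
Qed.

Lemma Ta_inv a t z : 0 < a -> Ta a t = z -> t = a * z - 1 \/ t = a * z + 1.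
Proof.
  intros Ha; unfold Ta; destruct (Rlt_dec t 1); intros <-; [left|right]; field; lra.
Qed.

Fixpoint Lp (a : R) (n : nat) (z : R) : list R :=
  match n with O => z :: nil | S m => Lp a m (a*z - 1) ++ Lp a m (a*z+1) end.

Lemma Lp_spec a n : 0 < a -> forall x z, Tit a n x = z -> In x (Lp a n z).
Proof.
  intros Ha; induction n as [|n IH]; intros x z H.
  - left. rewrite Tit_0 in H. auto.
  - rewrite Tit_S in H. simpl. apply in_or_app.
    destruct (Ta_inv _ _ _ Ha H) as [E|E]; [left|right]; apply IH; exact E.
Qed.

Lemma lmax (P : R -> Prop) (l : list R) :
  (exists x, In x l /\ P x) -> exists m, In m l /\ P m /\ forall x, In x l -> P x -> x <= m.
Proof.
  induction l as [|h t IH]; intros [x [Hx Px]]; [destruct Hx|].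
  destruct (classic (exists x, In x t /\ P x)) as [He|Hne].
  - destruct (IH He) as [m [Hm [Pm Hmax]]].
    destruct (classic (P h)) as [Ph|nPh].
    + destruct (Rle_dec h m).
      * exists m. split; [right; auto|split; auto]. intros y [E|Hy] Py; [subst; auto|auto].
      * exists h. split; [left; auto | split; auto]. intros y [E|Hy] Py; [subst; lra|].
        specialize (Hmax y Hy Py); lra.
    + exists m. split; [right;auto|split;auto]. intros y [E|Hy] Py; [subst; contradiction| auto].
  - destruct Hx as [E|Hx]; [subst|exfalso; apply Hne; eauto].
    exists x. split; [left; auto|split; auto]. intros y [E|Hy] Py; [subst; lra| exfalso; apply Hne; eauto].
Qed.

Lemma lmin (P : R -> Prop) (l : list R) :
  (exists x, In x l /\ P x) -> exists m, In m l /\ P m /\ forall x, In x l -> P x -> m <= x.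
Proof.
  induction l as [|h t IH]; intros [x [Hx Px]]; [destruct Hx|].
  destruct (classic (exists x, In x t /\ P x)) as [He|Hne].
  - destruct (IH He) as [m [Hm [Pm Hmax]]].
    destruct (classic (P h)) as [Ph|nPh].
    + destruct (Rle_dec m h).
      * exists m. split; [right; auto|split; auto]. intros y [E|Hy] Py; [subst; auto|auto].
      * exists h. split; [left; auto | split; auto]. intros y [E|Hy] Py; [subst; lra|].
        specialize (Hmax y Hy Py); lra.
    + exists m. split; [right;auto|split;auto]. intros y [E|Hy] Py; [subst; contradiction| auto].
  - destruct Hx as [E|Hx]; [subst|exfalso; apply Hne; eauto].
    exists x. split; [left; auto|split; auto]. intros y [E|Hy] Py; [subst; lra| exfalso; apply Hne; eauto].
Qed.

Lemma list_filter (P : R -> Prop) (l : list R) : exists s, forall x, In x s <-> In x l /\ P x.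
Proof.
  induction l as [|h t [s Hs]].
  - exists nil. simpl. tauto.
  - destruct (classic (P h)) as [Ph|nPh].
    + exists (h :: s). intros x. simpl. rewrite Hs. split.
      * intros [E|[A B]]; [subst; tauto|tauto].
      * intros [[E|A] B]; [left; auto|right; tauto].
    + exists s. intros x. simpl. rewrite Hs. split.
      * tauto.
      * intros [[E|A] B]; [subst; contradiction|tauto].
Qed.

Lemma kappa_mono a x n m : kappa_ge a x n -> (m <= n)%nat -> kappa_ge a x m.
Proof. intros [D H] Hm. split; auto. intros j Hj. apply H. lia. Qed.

Lemma Dlist a k : 0 < a -> exists s, forall y, Dk a k y <-> In y s.
Proof.
  intros Ha.
  destruct (list_filter (Dk a k) (Ra a :: flat_map (fun n => Lp a n (ca a)) (seq 0 k))) as [s Hs].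
  exists s. intros y. rewrite Hs. split; [|tauto]. intros HD; split; auto.
  destruct HD as [[n [Hn [_ HT]]]|E]; [right|left; auto].
  apply in_flat_map. exists n. split; [apply in_seq; lia| apply Lp_spec; auto].
Qed.

Lemma Gk_decomp a k g : 0 < a -> Gk a k g ->
  g = 0 \/ exists j, (j < k)%nat /\ kappa_ge a g j /\ Tit a j g = 1.
Proof.
  intros Ha [[n [Hn [Hk HT]]] Hkk].
  destruct n as [|m]; [left; rewrite Tit_0 in HT; auto|right].
  exists m. split; [lia|split; [apply (kappa_mono _ _ _ _ Hkk); lia|]].
  rewrite Tit_S in HT. destruct (Ta_inv _ _ _ Ha HT) as [E|E].
  - exfalso. assert (0 <= Tit a m g) by (apply Tit_nonneg; auto; destruct Hk as [[? ?] _]; auto). lra.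
  - rewrite E; ring.
Qed.

Lemma Ta1 a : 0 < a -> Ta a 1 = 0.
Proof. intros Ha. unfold Ta. destruct (Rlt_dec 1 1); [lra|]. field; lra. Qed.

Lemma gk_eq a k x g : is_gk a k x g -> gk a k x = g.
Proof.
  intros H. unfold gk.
  assert (H2 := epsilon_spec (inhabits 0) (is_gk a k x) (ex_intro _ g H)).
  set (e := epsilon _ _) in *.
  destruct H as [G1 [L1 M1]], H2 as [G2 [L2 M2]].
  apply Rle_antisym; [apply M1|apply M2]; auto.
Qed.

Lemma cont_incr a j (P : R -> Prop) : 0 < a ->
  (forall x x', P x -> P x' -> forall i, (i < j)%nat -> delta a i x = delta a i x') ->
  cont_on P (Tit a j) /\ strict_incr_on P (Tit a j).
Proof.
  intros Ha Hd. assert (Hp : 0 < a ^ j) by (apply pow_lt; lra). split.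
  - intros x Px eps He. exists (eps * a ^ j). split; [apply Rmult_lt_0_compat; lra|].
    intros x' Px' Hx. rewrite (Tit_affine a j x x' Ha (Hd x x' Px Px')).
    unfold Rdiv. rewrite Rabs_mult, (Rabs_right (/ a ^ j)); [|left; apply Rinv_0_lt_compat; auto].
    apply (Rmult_lt_reg_r (a ^ j)); auto. rewrite Rmult_assoc, Rinv_l; lra.
  - intros x x' Px Px' Hlt. assert (E := Tit_affine a j x x' Ha (Hd x x' Px Px')).
    assert (0 < (x' - x) / a ^ j) by (apply Rdiv_lt_0_compat; lra). lra.
Qed.

Section A.
Variable a : R.
Hypothesis Ha : 1/2 < a < 2/3.

Lemma ca_lt1 : ca a < 1.
Proof.
  unfold ca. replace ((2*a-1)/(1-a)) with (1 - (2 - 3*a)/(1-a)) by (field; lra).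
  assert (0 < (2 - 3*a)/(1-a)) by (apply Rdiv_lt_0_compat; lra). lra.
Qed.

Lemma Ra_ge1 : 1 <= Ra a.
Proof.
  unfold Ra. replace (1/(1-a)) with (1 + a/(1-a)) by (field; lra).
  assert (0 < a/(1-a)) by (apply Rdiv_lt_0_compat; lra). lra.
Qed.

Lemma Ta_Ra : Ta a (Ra a) = Ra a.
Proof. pose proof Ra_ge1. unfold Ta. destruct (Rlt_dec (Ra a) 1); [lra|]. unfold Ra. field; lra. Qed.

Lemma Tit_Ra n : Tit a n (Ra a) = Ra a.
Proof. induction n; [reflexivity|]. rewrite Tit_S, IHn. apply Ta_Ra. Qed.

Lemma Ta_ca : Ta a (ca a) = Ra a.
Proof. pose proof ca_lt1. unfold Ta. destruct (Rlt_dec (ca a) 1); [|lra]. unfold Ra, ca. field; lra. Qed.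

Lemma D_in_S k y : Dk a k y -> kappa_ge a y k.
Proof.
  pose proof ca_lt1 as Hc. pose proof Ra_ge1 as HR.
  intros [[n [Hn [[Hd Hk] HT]]]|E].
  - split; auto. intros j Hj. destruct (lt_dec j n) as [l|l]; [apply Hk; auto|].
    destruct (Nat.eq_dec j n) as [e|e].
    + subst. rewrite HT. unfold in_Ia. lra.
    + replace j with ((j - S n) + S n)%nat by lia. rewrite Tit_add, Tit_S, HT, Ta_ca, Tit_Ra.
      unfold in_Ia. lra.
  - subst. split; [unfold in_dom; lra|]. intros j _. rewrite Tit_Ra. unfold in_Ia. lra.
Qed.

Lemma fillR k u v :
  kappa_ge a u k -> u <= v -> v <= Ra a ->
  (forall w j, (j < k)%nat -> u <= w < v -> kappa_ge a w j -> Tit a j w = ca a -> False) ->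
  forall z, u <= z <= v -> kappa_ge a z k /\ forall i, (i < k)%nat -> delta a i z = delta a i u.
Proof.
  intros Hu Huv Hv Hno.
  assert (Hgen: forall j, (j <= k)%nat -> forall z, u <= z <= v ->
     kappa_ge a z j /\ forall i, (i<j)%nat -> delta a i z = delta a i u).
  { induction j as [|j IH]; intros Hj z Hz.
    - destruct Hu as [[Hu0 _] _]. split; [split; [unfold in_dom; lra|intros i Hi; lia]|intros i Hi; lia].
    - destruct (IH ltac:(lia) z Hz) as [Kz Dz].
      assert (Aff := Tit_affine a j u z ltac:(lra) (fun i Hi => eq_sym (Dz i Hi))).
      assert (Hp : 0 < a ^ j) by (apply pow_lt; lra).
      assert (Hq : 0 <= (z - u) / a ^ j) by (apply Rdiv_le_0_compat; lra).
      pose proof (proj2 Hu j ltac:(lia)) as Huj. unfold in_Ia in Huj.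
      assert (Hcase : Tit a j z < 1 /\ ~ in_Ia a (Tit a j z) /\ Tit a j u < 1 \/
                      ~ Tit a j z < 1 /\ ~ in_Ia a (Tit a j z) /\ ~ Tit a j u < 1).
      { destruct (Rle_dec 1 (Tit a j u)).
        - right. unfold in_Ia. split; [lra|split; lra].
        - assert (Htu : Tit a j u <= ca a) by (pose proof ca_lt1; lra).
          left. destruct (Rle_dec (Tit a j z) (ca a)) as [Hle|Hgt].
          + pose proof ca_lt1. unfold in_Ia. split; [lra|split; lra].
          + exfalso. set (w := u + (ca a - Tit a j u) * a ^ j).
            assert (Hw1 : u <= w) by (unfold w; assert (0 <= (ca a - Tit a j u) * a ^ j) by (apply Rmult_le_pos; lra); lra).
            assert (Hw2 : w < z).
            { unfold w. assert (E : z - u = ((z - u) / a ^ j) * a ^ j) by (field; lra).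
              assert ((ca a - Tit a j u) * a ^ j < ((z - u) / a ^ j) * a ^ j) by (apply Rmult_lt_compat_r; lra).
              lra. }
            destruct (IH ltac:(lia) w ltac:(lra)) as [Kw Dw].
            assert (Aw := Tit_affine a j u w ltac:(lra) (fun i Hi => eq_sym (Dw i Hi))).
            apply (Hno w j ltac:(lia) ltac:(lra) Kw).
            assert (E : (w - u) / a ^ j = ca a - Tit a j u) by (unfold w; field; lra). lra. }
      split.
      + split; [destruct Kz; auto|]. intros i Hi. destruct (Nat.eq_dec i j); [subst; tauto|].
        apply (proj2 Kz). lia.
      + intros i Hi. destruct (Nat.eq_dec i j); [subst; apply delta_iff; tauto|]. apply Dz; lia. }
  intros z Hz. apply Hgen; auto.
Qed.

Lemma fillL k u v :
  kappa_ge a v k -> 0 <= u -> u <= v ->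
  (forall w j, (j < k)%nat -> u < w <= v -> kappa_ge a w j -> Tit a j w = 1 -> False) ->
  forall z, u <= z <= v -> kappa_ge a z k /\ forall i, (i < k)%nat -> delta a i z = delta a i v.
Proof.
  intros Hv Hu0 Huv Hno.
  assert (Hgen: forall j, (j <= k)%nat -> forall z, u <= z <= v ->
     kappa_ge a z j /\ forall i, (i<j)%nat -> delta a i z = delta a i v).
  { induction j as [|j IH]; intros Hj z Hz.
    - destruct Hv as [[_ Hv1] _]. split; [split; [unfold in_dom; lra|intros i Hi; lia]|intros i Hi; lia].
    - destruct (IH ltac:(lia) z Hz) as [Kz Dz].
      assert (Aff := Tit_affine a j z v ltac:(lra) Dz).
      assert (Hp : 0 < a ^ j) by (apply pow_lt; lra).
      assert (Hq : 0 <= (v - z) / a ^ j) by (apply Rdiv_le_0_compat; lra).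
      pose proof (proj2 Hv j ltac:(lia)) as Hvj. unfold in_Ia in Hvj.
      pose proof ca_lt1.
      assert (Hcase : Tit a j z < 1 /\ ~ in_Ia a (Tit a j z) /\ Tit a j v < 1 \/
                      ~ Tit a j z < 1 /\ ~ in_Ia a (Tit a j z) /\ ~ Tit a j v < 1).
      { destruct (Rle_dec 1 (Tit a j v)).
        - destruct (Rle_dec 1 (Tit a j z)).
          + right. unfold in_Ia. split; [lra|split; lra].
          + exfalso. set (w := v - (Tit a j v - 1) * a ^ j).
            assert (Hw1 : w <= v) by (unfold w; assert (0 <= (Tit a j v - 1) * a ^ j) by (apply Rmult_le_pos; lra); lra).
            assert (Hw2 : z < w).
            { unfold w. assert (E : v - z = ((v - z) / a ^ j) * a ^ j) by (field; lra).
              assert ((Tit a j v - 1) * a ^ j < ((v - z) / a ^ j) * a ^ j) by (apply Rmult_lt_compat_r; lra).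
              lra. }
            destruct (IH ltac:(lia) w ltac:(lra)) as [Kw Dw].
            assert (Aw := Tit_affine a j w v ltac:(lra) Dw).
            apply (Hno w j ltac:(lia) ltac:(lra) Kw).
            assert (E : (v - w) / a ^ j = Tit a j v - 1) by (unfold w; field; lra). lra.
        - left. unfold in_Ia. split; [lra|split; lra]. }
      split.
      + split; [destruct Kz; auto|]. intros i Hi. destruct (Nat.eq_dec i j); [subst; tauto|].
        apply (proj2 Kz). lia.
      + intros i Hi. destruct (Nat.eq_dec i j); [subst; apply delta_iff; tauto|]. apply Dz; lia. }
  intros z Hz. apply Hgen; auto.
Qed.

Lemma intv_noint k x y :
  (forall z, x <= z <= y -> kappa_ge a z k /\ forall i, (i<k)%nat -> delta a i z = delta a i y) ->
  (forall w j, (j<k)%nat -> x < w <= y -> Tit a j w = 1 -> False) /\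
  (forall w j, (j<k)%nat -> x <= w < y -> Tit a j w = ca a -> False).
Proof.
  intros Hf. pose proof ca_lt1 as Hc. split.
  - intros w j Hj Hw HT. assert (Hp : 0 < a ^ j) by (apply pow_lt; lra).
    assert (Hpos : 0 < (1 - ca a) * a ^ j / 2) by (apply Rdiv_lt_0_compat; [apply Rmult_lt_0_compat|]; lra).
    assert (Hz : exists z, x <= z < w /\ w - z <= (1 - ca a) * a ^ j / 2).
    { destruct (Rle_dec x (w - (1 - ca a) * a ^ j / 2)).
      - exists (w - (1 - ca a) * a ^ j / 2). split; lra.
      - exists x. split; lra. }
    destruct Hz as [z [Hz1 Hz2]].
    destruct (Hf z ltac:(lra)) as [Kz Dz]. destruct (Hf w ltac:(lra)) as [Kw Dw].
    assert (Aff := Tit_affine a j z w ltac:(lra) (fun i Hi => eq_trans (Dz i ltac:(lia)) (eq_sym (Dw i ltac:(lia))))).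
    assert (E1 : 0 < (w - z) / a ^ j) by (apply Rdiv_lt_0_compat; lra).
    assert (E2 : (w - z) / a ^ j <= (1 - ca a) / 2).
    { apply (Rmult_le_reg_r (a ^ j)); auto. replace ((w - z) / a ^ j * a ^ j) with (w - z) by (field; lra). lra. }
    apply (proj2 Kz j Hj). unfold in_Ia. lra.
  - intros w j Hj Hw HT. assert (Hp : 0 < a ^ j) by (apply pow_lt; lra).
    assert (Hpos : 0 < (1 - ca a) * a ^ j / 2) by (apply Rdiv_lt_0_compat; [apply Rmult_lt_0_compat|]; lra).
    assert (Hz : exists z, w < z <= y /\ z - w <= (1 - ca a) * a ^ j / 2).
    { destruct (Rle_dec (w + (1 - ca a) * a ^ j / 2) y).
      - exists (w + (1 - ca a) * a ^ j / 2). split; lra.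
      - exists y. split; lra. }
    destruct Hz as [z [Hz1 Hz2]].
    destruct (Hf z ltac:(lra)) as [Kz Dz]. destruct (Hf w ltac:(lra)) as [Kw Dw].
    assert (Aff := Tit_affine a j w z ltac:(lra) (fun i Hi => eq_trans (Dw i ltac:(lia)) (eq_sym (Dz i ltac:(lia))))).
    assert (E1 : 0 < (z - w) / a ^ j) by (apply Rdiv_lt_0_compat; lra).
    assert (E2 : (z - w) / a ^ j <= (1 - ca a) / 2).
    { apply (Rmult_le_reg_r (a ^ j)); auto. replace ((z - w) / a ^ j * a ^ j) with (z - w) by (field; lra). lra. }
    apply (proj2 Kz j Hj). unfold in_Ia. lra.
Qed.

End A.

Section A2.
Variable a : R.
Hypothesis Ha : 1/2 < a < 2/3.
Variable k : nat.

Lemma keyA y : kappa_ge a y k ->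
  is_gk a k y (gk a k y) /\ forall z, gk a k y <= z <= y ->
    kappa_ge a z k /\ forall i, (i<k)%nat -> delta a i z = delta a i y.
Proof.
  intros Hy. assert (Ha0 : 0 < a) by lra.
  set (l0 := 0 :: flat_map (fun j => Lp a j 1) (seq 0 k)).
  set (P := fun w => 0 <= w <= y /\ (w = 0 \/ exists j, (j<k)%nat /\ kappa_ge a w j /\ Tit a j w = 1)).
  assert (Hin : forall w, P w -> In w l0).
  { intros w [_ [E|[j [Hj [_ HT]]]]]; [left; auto|right].
    apply in_flat_map. exists j. split; [apply in_seq; lia|apply Lp_spec; auto]. }
  pose proof Hy as [[Hy0 Hy1] Hyk].
  destruct (lmax P l0) as [u [_ [Pu Hmax]]].
  { exists 0. split; [left; auto|]. split; [lra|left; auto]. }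
  pose proof Pu as [[Hu0 Huy] Pu2].
  assert (F := fillL a Ha k u y Hy Hu0 Huy
     (fun w j Hj Hw Kw HT => ltac:(
        assert (Pw : P w) by (split; [lra| right; exists j; auto]);
        specialize (Hmax w (Hin w Pw) Pw); lra))).
  assert (Hg : is_gk a k y u).
  { split; [|split; [apply Huy|]].
    - split; [|apply (proj1 (F u ltac:(lra)))].
      destruct (proj2 Pu) as [E|[j [Hj [Kj HT]]]].
      + exists O. split; [lia|]. split; [apply (kappa_mono _ _ k); [apply (proj1 (F u ltac:(lra)))|lia]|].
        rewrite Tit_0; auto.
      + exists (S j). split; [lia|]. split; [apply (kappa_mono _ _ k); [apply (proj1 (F u ltac:(lra)))|lia]|].
        rewrite Tit_S, HT. apply Ta1; auto.
    - intros g Hg Hgy. destruct (Gk_decomp a k g Ha0 Hg) as [E|[j [Hj [Kj HT]]]].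
      + lra.
      + assert (Pg : P g). { split; [split; [destruct Hg as [_ [[? _] _]]; lra|auto]|right; exists j; auto]. }
        apply Hmax; auto. }
  rewrite (gk_eq _ _ _ _ Hg). split; auto.
Qed.

Lemma cover x : kappa_ge a x k -> exists y, Dk a k y /\ gk a k y <= x <= y.
Proof.
  intros Hx. assert (Ha0 : 0 < a) by lra.
  destruct (Dlist a k Ha0) as [s Hs].
  destruct (lmin (fun y => Dk a k y /\ x <= y) s) as [y [_ [[Dy Hxy] Hmin]]].
  { exists (Ra a). split; [apply Hs; right; auto|]. split; [right; auto|]. destruct Hx as [[_ ?] _]; auto. }
  exists y. split; auto. split; auto.
  assert (Hyd : y <= Ra a).
  { destruct Dy as [[n [_ [[[_ ?] _] _]]]|E]; [auto|subst; lra]. }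
  assert (F := fillR a Ha k x y Hx Hxy Hyd
     (fun w j Hj Hw Kw HT => ltac:(
        assert (Dw : Dk a k w) by (left; exists j; split; [auto|split; auto]);
        specialize (Hmin w (proj1 (Hs w) Dw) (conj Dw (proj1 Hw))); lra))).
  destruct (keyA y (D_in_S a Ha k y Dy)) as [[Gg [Hgy _]] _].
  destruct (Rle_dec (gk a k y) x) as [|Hlt]; auto. exfalso. apply Rnot_le_lt in Hlt.
  assert (F' : forall z, x <= z <= y -> kappa_ge a z k /\ forall i, (i<k)%nat -> delta a i z = delta a i y).
  { intros z Hz. split; [apply (F z Hz)|]. intros i Hi. rewrite (proj2 (F z Hz) i Hi), (proj2 (F y ltac:(lra)) i Hi). auto. }
  destruct (intv_noint a Ha k x y F') as [N1 _].
  destruct (Gk_decomp a k _ Ha0 Gg) as [E|[j [Hj [Kj HT]]]].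
  - destruct Hx as [[? _] _]. lra.
  - apply (N1 (gk a k y) j Hj ltac:(lra) HT).
Qed.

Lemma partA : (forall y, Dk a k y -> is_gk a k y (gk a k y)) /\ assertions a k (gk a k) (fun _ => True).
Proof.
  assert (Ha0 : 0 < a) by lra.
  assert (Hiv : forall l y x, in_intv l y True x <-> l <= x <= y).
  { intros l y x. unfold in_intv. split; [intros [A [B|[_ B]]]; lra|intros [A B]; split; auto].
    destruct B; [left; auto|right; split; auto]. }
  split; [intros y Dy; apply (keyA y (D_in_S a Ha k y Dy))|].
  split; [apply Dlist; auto|].
  split.
  { intros x. split.
    - intros Hx. destruct (cover x Hx) as [y [Dy H]]. exists y. split; auto. apply Hiv; auto.
    - intros [y [Dy Hx]]. apply Hiv in Hx. apply (keyA y (D_in_S a Ha k y Dy)); auto. }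
  split.
  { assert (Aux : forall y y', Dk a k y -> Dk a k y' -> y < y' -> forall x,
       ~ (in_intv (gk a k y) y True x /\ in_intv (gk a k y') y' True x)).
    { intros y y' Dy Dy' Hlt x [H1 H2]. apply Hiv in H1. apply Hiv in H2.
      destruct (keyA y' (D_in_S a Ha k y' Dy')) as [_ F].
      destruct (intv_noint a Ha k (gk a k y') y' F) as [_ N2].
      destruct Dy as [[n [Hn [Kn HT]]]|E].
      - apply (N2 y n Hn ltac:(lra) HT).
      - assert (y' <= Ra a) by (destruct Dy' as [[n [_ [[[_ ?] _] _]]]|E']; [auto|subst; lra]). lra. }
    intros y y' Dy Dy' Hne x. destruct (Rtotal_order y y') as [Hl|[He|Hg]].
    - apply Aux; auto.
    - contradiction.
    - intros [A B]. apply (Aux y' y Dy' Dy Hg x); auto. }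
  split.
  { intros g. split.
    - intros Gg. destruct (cover g (proj2 Gg)) as [y [Dy [H1 H2]]]. exists y. split; auto.
      destruct (keyA y (D_in_S a Ha k y Dy)) as [[_ [_ M]] _]. specialize (M g Gg H2). lra.
    - intros [y [Dy <-]]. apply (keyA y (D_in_S a Ha k y Dy)). }
  split.
  { intros y Dy j Hj x x' Hx Hx'. apply Hiv in Hx. apply Hiv in Hx'.
    destruct (keyA y (D_in_S a Ha k y Dy)) as [_ F].
    rewrite (proj2 (F x Hx) j Hj), (proj2 (F x' Hx') j Hj). auto. }
  intros y Dy j Hj. apply cont_incr; auto.
  intros x x' Hx Hx' i Hi. apply Hiv in Hx. apply Hiv in Hx'.
  destruct (keyA y (D_in_S a Ha k y Dy)) as [_ F].
  rewrite (proj2 (F x Hx) i ltac:(lia)), (proj2 (F x' Hx') i ltac:(lia)). auto.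
Qed.

End A2.

Lemma ca23 : ca (2/3) = 1.
Proof. unfold ca. field. Qed.
Lemma Ra23 : Ra (2/3) = 3.
Proof. unfold Ra. field. Qed.

Lemma kappa23 x n : kappa_ge (2/3) x n <-> 0 <= x <= 3.
Proof.
  unfold kappa_ge, in_dom, in_Ia. rewrite ca23, Ra23. split; [tauto|].
  intros H; split; auto. intros j _ C; lra.
Qed.

Lemma Tit3 n : Tit (2/3) n 3 = 3.
Proof.
  induction n; [reflexivity|]. rewrite Tit_S, IHn. unfold Ta.
  destruct (Rlt_dec 3 1); [lra|]. field.
Qed.

Lemma pow2_even n : exists q, 2 ^ (S n) = IZR (2 * q).
Proof.
  exists (2 ^ Z.of_nat n)%Z. rewrite mult_IZR, <- pow_IZR. simpl. ring.
Qed.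

Lemma Tit0_odd n : exists p, Tit (2/3) (S n) 0 * 2 ^ (S n) = IZR (2 * p + 1).
Proof.
  induction n as [|n [p Hp]].
  - exists 1%Z. simpl. unfold Ta. destruct (Rlt_dec 0 1); [|lra]. simpl. field.
  - destruct (pow2_even n) as [q Hq].
    rewrite Tit_S. set (t := Tit (2/3) (S n) 0) in *. unfold Ta.
    replace (2 ^ S (S n)) with (2 * 2 ^ S n) by (simpl; ring).
    rewrite plus_IZR, mult_IZR in Hp. rewrite mult_IZR in Hq.
    destruct (Rlt_dec t 1).
    + exists (3 * p + 3 * q + 1)%Z. repeat rewrite ?plus_IZR, ?minus_IZR, ?mult_IZR.
      replace ((t + 1) / (2 / 3) * (2 * 2 ^ S n)) with (3 * (t * 2 ^ S n) + 3 * 2 ^ S n) by field.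
      rewrite Hp, Hq. ring.
    + exists (3 * p - 3 * q + 1)%Z. repeat rewrite ?plus_IZR, ?minus_IZR, ?mult_IZR.
      replace ((t - 1) / (2 / 3) * (2 * 2 ^ S n)) with (3 * (t * 2 ^ S n) - 3 * 2 ^ S n) by field.
      rewrite Hp, Hq. ring.
Qed.

Lemma Tit0_ne1 n : Tit (2/3) n 0 <> 1.
Proof.
  destruct n as [|n]; [rewrite Tit_0; lra|].
  intros E. destruct (Tit0_odd n) as [p Hp]. destruct (pow2_even n) as [q Hq].
  rewrite E, Rmult_1_l, Hq in Hp. apply eq_IZR in Hp. lia.
Qed.

Section B.
Variable k : nat.
Let a := 2/3.
Let Ha0 : 0 < a. Proof. unfold a; lra. Qed.

Definition Dp (w : R) : Prop := exists j, (j < k)%nat /\ 0 <= w <= 3 /\ Tit a j w = 1.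

Lemma G23 g : Gk a k g <-> g = 0 \/ Dp g.
Proof.
  split.
  - intros Gg. destruct (Gk_decomp a k g Ha0 Gg) as [E|[j [Hj [Kj HT]]]]; [left; auto|right].
    exists j. split; auto. split; auto. apply (proj1 (kappa23 g j)); auto.
  - intros [E|[j [Hj [Hg HT]]]].
    + subst. split; [exists O; split; [lia|split; [apply kappa23; lra|reflexivity]]|apply kappa23; lra].
    + split; [|apply kappa23; auto]. exists (S j). split; [lia|split; [apply kappa23; auto|]].
      rewrite Tit_S, HT. apply Ta1; auto.
Qed.

Lemma D23 y : Dk a k y <-> Dp y \/ y = 3.
Proof.
  unfold Dk. unfold a. rewrite ca23, Ra23. split.
  - intros [[n [Hn [Kn HT]]]|E]; [left|right; auto]. exists n. split; auto. split; auto.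
    apply (proj1 (kappa23 y n)); auto.
  - intros [[n [Hn [Hy HT]]]|E]; [left|right; auto]. exists n. split; auto. split; auto.
    apply kappa23; auto.
Qed.

Lemma Gdom g : Gk a k g -> 0 <= g <= 3.
Proof. intros [_ K]. apply (proj1 (kappa23 g k)); auto. Qed.

Lemma G0 : Gk a k 0.
Proof. apply G23; auto. Qed.

Lemma Dp_not0 : ~ Dp 0.
Proof. intros [j [_ [_ HT]]]. apply (Tit0_ne1 j HT). Qed.
Lemma Dp_not3 : ~ Dp 3.
Proof. intros [j [_ [_ HT]]]. unfold a in HT. rewrite Tit3 in HT. lra. Qed.

Let l0 := 0 :: flat_map (fun j => Lp a j 1) (seq 0 k).
Lemma G_in g : Gk a k g -> In g l0.
Proof.
  intros Gg. apply G23 in Gg. destruct Gg as [E|[j [Hj [_ HT]]]]; [left; auto|right].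
  apply in_flat_map. exists j. split; [apply in_seq; lia|apply Lp_spec; auto].
Qed.

Lemma Gmax (Q : R -> Prop) : (exists g, Gk a k g /\ Q g) ->
  exists m, Gk a k m /\ Q m /\ forall g, Gk a k g -> Q g -> g <= m.
Proof.
  intros [g [Gg Qg]]. destruct (lmax (fun x => Gk a k x /\ Q x) l0) as [m [_ [[Gm Qm] M]]].
  { exists g. split; [apply G_in|]; auto. }
  exists m. split; auto. split; auto. intros x Gx Qx. apply M; auto. apply G_in; auto.
Qed.

Lemma Gmin (Q : R -> Prop) : (exists g, Gk a k g /\ Q g) ->
  exists m, Gk a k m /\ Q m /\ forall g, Gk a k g -> Q g -> m <= g.
Proof.
  intros [g [Gg Qg]]. destruct (lmin (fun x => Gk a k x /\ Q x) l0) as [m [_ [[Gm Qm] M]]].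
  { exists g. split; [apply G_in|]; auto. }
  exists m. split; auto. split; auto. intros x Gx Qx. apply M; auto. apply G_in; auto.
Qed.

Lemma fillB u v (cl : Prop) :
  (forall w j, (j<k)%nat -> u < w -> in_intv u v cl w -> Tit a j w = 1 -> False) ->
  forall z, in_intv u v cl z -> forall i, (i<k)%nat -> delta a i z = delta a i u.
Proof.
  intros Hno.
  assert (Hgen : forall j, (j <= k)%nat -> forall z, in_intv u v cl z ->
     forall i, (i<j)%nat -> delta a i z = delta a i u).
  { induction j as [|j IH]; intros Hj z Hz; [intros i Hi; lia|].
    assert (Dz := IH ltac:(lia) z Hz).
    assert (Aff := Tit_affine a j u z Ha0 (fun i Hi => eq_sym (Dz i Hi))).
    assert (Hp : 0 < a ^ j) by (apply pow_lt; auto).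
    destruct Hz as [Hz1 Hz2].
    assert (Hq : 0 <= (z - u) / a ^ j) by (apply Rdiv_le_0_compat; lra).
    assert (Hj' : delta a j z = delta a j u).
    { apply delta_iff. destruct (Rlt_dec (Tit a j u) 1) as [Hl|Hl]; [|split; intro; lra].
      destruct (Rlt_dec (Tit a j z) 1) as [Hl2|Hl2]; [tauto|exfalso].
      set (w := u + (1 - Tit a j u) * a ^ j).
      assert (Hw1 : u < w) by (unfold w; assert (0 < (1 - Tit a j u) * a ^ j) by (apply Rmult_lt_0_compat; lra); lra).
      assert (Hw2 : w <= z).
      { unfold w. assert (E : z - u = ((z - u) / a ^ j) * a ^ j) by (field; lra).
        assert ((1 - Tit a j u) * a ^ j <= ((z - u) / a ^ j) * a ^ j) by (apply Rmult_le_compat_r; lra).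
        lra. }
      assert (Iw : in_intv u v cl w).
      { split; [lra|]. destruct Hz2 as [A|[C B]]; [left; lra|].
        destruct (Rle_lt_or_eq_dec w v ltac:(lra)); [left; auto|right; split; auto]. }
      assert (Dw := IH ltac:(lia) w Iw).
      assert (Aw := Tit_affine a j u w Ha0 (fun i Hi => eq_sym (Dw i Hi))).
      apply (Hno w j ltac:(lia) Hw1 Iw).
      assert (E : (w - u) / a ^ j = 1 - Tit a j u) by (unfold w; field; lra). lra. }
    intros i Hi. destruct (Nat.eq_dec i j); [subst; auto|]. apply Dz; lia. }
  intros z Hz i Hi. apply (Hgen k (le_n k)); auto.
Qed.

End B.

Definition is_predB k y g := Gk (2/3) k g /\ g < y /\ forall g', Gk (2/3) k g' -> g' < y -> g' <= g.
Definition gpB k y := epsilon (inhabits 0) (is_predB k y).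
Definition lB k y := if Req_EM_T y 3 then gk (2/3) k 3 else gpB k y.

Lemma partB k : exists l : R -> R,
     (forall y, Dk (2/3) k y -> y <> 3 -> filterlim (gk (2/3) k) (at_left y) (locally (l y))) /\
     is_gk (2/3) k 3 (gk (2/3) k 3) /\ l 3 = gk (2/3) k 3 /\
     assertions (2/3) k l (fun y => y = 3).
Proof.
  assert (Ha0 : 0 < 2/3) by lra.
  assert (HG3 : is_gk (2/3) k 3 (gk (2/3) k 3)).
  { destruct (Gmax k (fun g => g <= 3)) as [m [Gm [Qm M]]].
    { exists 0. split; [apply G0|lra]. }
    assert (H : is_gk (2/3) k 3 m) by (split; auto).
    rewrite (gk_eq _ _ _ _ H). auto. }
  assert (Hpred : forall y, 0 < y -> is_predB k y (gpB k y)).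
  { intros y Hy. destruct (Gmax k (fun g => g < y)) as [m [Gm [Qm M]]].
    { exists 0. split; [apply G0|lra]. }
    apply (epsilon_spec (inhabits 0) (is_predB k y)). exists m. split; auto. }
  assert (Hl3 : lB k 3 = gk (2/3) k 3).
  { unfold lB. destruct (Req_EM_T 3 3); [auto|contradiction]. }
  assert (Dbnd : forall y, Dk (2/3) k y -> 0 <= y <= 3).
  { intros y Dy. apply D23 in Dy. destruct Dy as [[j [_ [H _]]]|E]; [auto|subst; lra]. }
  assert (Dpos : forall y, Dk (2/3) k y -> y <> 3 -> Dp k y /\ 0 < y).
  { intros y Dy Hne. apply D23 in Dy. destruct Dy as [Dy|E]; [|contradiction].
    split; auto. destruct Dy as [j [Hj [H HT]]]. destruct (Req_EM_T y 0) as [E|E].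
    - subst. exfalso. apply (Tit0_ne1 j HT).
    - lra. }
  assert (LY : forall y, Dk (2/3) k y -> Gk (2/3) k (lB k y) /\ in_intv (lB k y) y (y = 3) (lB k y) /\
             forall g, Gk (2/3) k g -> (g < y \/ (y = 3 /\ g = y)) -> g <= lB k y).
  { intros y Dy. unfold lB. destruct (Req_EM_T y 3) as [E|Hne].
    - subst. destruct HG3 as [G [Le M]]. split; auto. split.
      + split; [lra|]. destruct (Rle_lt_or_eq_dec _ _ Le); [left; auto|right; split; auto].
      + intros g Gg [Hg|[_ Hg]]; apply M; auto; lra.
    - destruct (Dpos y Dy Hne) as [_ Hy]. destruct (Hpred y Hy) as [G [Lt M]].
      split; auto. split; [split; [lra|left; auto]|].
      intros g Gg [Hg|[C _]]; [apply M; auto|contradiction]. }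
  assert (Hfill : forall y, Dk (2/3) k y -> forall z, in_intv (lB k y) y (y = 3) z ->
            forall i, (i < k)%nat -> delta (2/3) i z = delta (2/3) i (lB k y)).
  { intros y Dy. apply fillB. intros w j Hj Hw Iw HT.
    destruct (LY y Dy) as [G [_ M]].
    assert (Gw : Gk (2/3) k w).
    { apply G23. right. exists j. split; auto. split; auto.
      pose proof (Gdom k _ G). pose proof (Dbnd y Dy).
      destruct Iw as [_ [A|[_ B]]]; split; lra. }
    destruct Iw as [_ Iw]. specialize (M w Gw Iw). lra. }
  assert (Hsucc : forall g, Gk (2/3) k g -> g < gk (2/3) k 3 ->
            exists s, Dk (2/3) k s /\ s <> 3 /\ g < s /\ lB k s = g).
  { intros g Gg Hlt.
    destruct (Gmin k (fun s => g < s)) as [s [Gs [Qs M]]].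
    { exists (gk (2/3) k 3). split; [apply HG3|auto]. }
    assert (Dps : Dp k s).
    { apply G23 in Gs. destruct Gs as [E|D]; [|auto]. pose proof (Gdom k g Gg). lra. }
    assert (Hs3 : s <> 3) by (intros E; subst; apply (Dp_not3 k Dps)).
    assert (Ds : Dk (2/3) k s) by (apply D23; left; auto).
    exists s. split; auto. split; auto. split; auto.
    destruct (LY s Ds) as [Gl [[_ Il] M2]].
    destruct Il as [Il|[C _]]; [|contradiction].
    assert (g <= lB k s) by (apply M2; auto).
    destruct (Rle_lt_or_eq_dec _ _ H) as [H'|H']; [|auto].
    specialize (M _ Gl H'). lra. }
  exists (lB k).
  split.
  { intros y Dy Hne. destruct (Dpos y Dy Hne) as [_ Hy].
    assert (E : lB k y = gpB k y) by (unfold lB; destruct (Req_EM_T y 3); [contradiction|auto]).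
    rewrite E. destruct (Hpred y Hy) as [G [Lt M]].
    apply filterlim_ext_loc with (f := fun _ => gpB k y); [|apply filterlim_const].
    assert (Hp : 0 < y - gpB k y) by lra.
    exists (mkposreal _ Hp). intros x Hb Hlt. apply Rabs_lt_between' in Hb. simpl in Hb.
    symmetry. apply gk_eq. split; auto. split; [lra|]. intros g Gg Hg. apply M; auto. lra. }
  split; auto. split; auto.
  split; [apply Dlist; auto|].
  split.
  { intros x. split.
    - intros Hx. apply kappa23 in Hx. destruct (Rle_dec (gk (2/3) k 3) x) as [Hle|Hlt].
      + exists 3. split; [apply D23; right; auto|]. rewrite Hl3. split; auto.
        destruct (Rle_lt_or_eq_dec x 3 ltac:(lra)); [left; auto|right; split; auto].
      + apply Rnot_le_lt in Hlt.
        destruct (Gmin k (fun s => x < s)) as [s [Gs [Qs M]]].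
        { exists (gk (2/3) k 3). split; [apply HG3|auto]. }
        assert (Dps : Dp k s).
        { apply G23 in Gs. destruct Gs as [E|D]; [lra|auto]. }
        assert (Hs3 : s <> 3) by (intros E; subst; apply (Dp_not3 k Dps)).
        assert (Ds : Dk (2/3) k s) by (apply D23; left; auto).
        exists s. split; auto.
        destruct (LY s Ds) as [Gl [[_ Il] _]]. destruct Il as [Il|[C _]]; [|contradiction].
        split; [|left; auto]. destruct (Rle_dec (lB k s) x) as [|H]; auto.
        apply Rnot_le_lt in H. specialize (M _ Gl H). lra.
    - intros [y [Dy Ix]]. apply kappa23.
      destruct (LY y Dy) as [Gl _]. pose proof (Gdom k _ Gl). pose proof (Dbnd y Dy).
      destruct Ix as [A [B|[_ B]]]; split; lra. }
  split.
  { assert (Aux : forall y y', Dk (2/3) k y -> Dk (2/3) k y' -> y < y' -> forall x,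
       ~ (in_intv (lB k y) y (y = 3) x /\ in_intv (lB k y') y' (y' = 3) x)).
    { intros y y' Dy Dy' Hlt x [[A1 B1] [A2 B2]].
      pose proof (Dbnd y' Dy').
      assert (Hy3 : y <> 3) by lra.
      destruct (Dpos y Dy Hy3) as [Dpy _].
      assert (Gy : Gk (2/3) k y) by (apply G23; right; auto).
      destruct (LY y' Dy') as [_ [_ M]]. specialize (M y Gy (or_introl Hlt)).
      destruct B1 as [B1|[C _]]; [lra|contradiction]. }
    intros y y' Dy Dy' Hne x. destruct (Rtotal_order y y') as [Hl|[He|Hg]].
    - apply Aux; auto.
    - contradiction.
    - intros [A B]. apply (Aux y' y Dy' Dy Hg x); auto. }
  split.
  { intros g. split.
    - intros Gg. destruct (Rle_dec (gk (2/3) k 3) g) as [Hle|Hlt].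
      + exists 3. split; [apply D23; right; auto|]. rewrite Hl3.
        destruct HG3 as [_ [_ M]]. pose proof (Gdom k g Gg). specialize (M g Gg ltac:(lra)). lra.
      + apply Rnot_le_lt in Hlt. destruct (Hsucc g Gg Hlt) as [s [Ds [_ [_ E]]]].
        exists s. auto.
    - intros [y [Dy <-]]. apply (LY y Dy). }
  split.
  { intros y Dy j Hj x x' Hx Hx'. rewrite (Hfill y Dy x Hx j Hj), (Hfill y Dy x' Hx' j Hj). auto. }
  intros y Dy j Hj. apply cont_incr; auto.
  intros x x' Hx Hx' i Hi. rewrite (Hfill y Dy x Hx i ltac:(lia)), (Hfill y Dy x' Hx' i ltac:(lia)). auto.
Qed.

Theorem lemma3p3 (k : nat) (hk : (1 <= k)%nat) :
  (* (a) *)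
  (forall a : R, 1/2 < a < 2/3 ->
     (forall y, Dk a k y -> is_gk a k y (gk a k y)) /\
     assertions a k (gk a k) (fun _ => True)) /\
  (* (b) a = 2/3, with intervals [g_k(y-), y) for y <> 3 and [g_k(3), 3] *)
  (let a := 2/3 in
   exists l : R -> R,
     (forall y, Dk a k y -> y <> 3 ->
        filterlim (gk a k) (at_left y) (locally (l y))) /\
     is_gk a k 3 (gk a k 3) /\ l 3 = gk a k 3 /\
     assertions a k l (fun y => y = 3)).
Proof.
  split.
  - intros a Ha. apply partA; auto.
  - cbv zeta. apply partB.
Qed.
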